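(* Let $p$ be a self-adjoint projection of $V$ and let $\Phi_0$ and $\Phi_\lambda$ be two distinct quadrics belonging to a projection pencil associated to $p$, generated by invertible self-adjoint transformations $g_0$ and $g_\lambda$ respectively. If $x$ is a common point of $\Phi_0$ and $\Phi_\lambda$, then $\langle p(g_0(x)),g_\lambda(x)\rangle=0$; i.e. the quadrics intersect orthogonally with respect to the quadratic form of $p$.
   Context: $V$ is a real vector space of dimension $n+1$ with a fixed indefinite inner product (nondegenerate symmetric bilinear form) $\langle\cdot,\cdot\rangle$. A linear map $g$ is self-adjoint if $\langle g(x),y\rangle=\langle x,g(y)\rangle$ for all $x,y$. A projection is a linear map $p$ with $p^2=p$. A quadric is the zero set in $P(V)$ of $x\mapsto\langle x,g(x)\rangle$ for a self-adjoint $g$ (generated by $g$); its dual is given by $g^{-1}$ when $g$ is invertible. A projection pencil associated to $p$ is a maximal set of quadrics whose dual self-adjoint transformations lie in a two-dimensional subspace of the space of linear maps of $V$ that contains $p$. *)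

(* Defs.v *)
(* V = column vectors 'cV[R]_(n.+1) over a real field R : realType;
   linear maps of V = square matrices acting on the left. *)
From HB Require Import structures.
From mathcomp Require Import all_boot all_order all_algebra.
From mathcomp Require Import reals.
Set Implicit Arguments. Unset Strict Implicit. Unset Printing Implicit Defensive.
Import Order.TTheory GRing.Theory Num.Theory.
Local Open Scope ring_scope.

Section Defs.
Variables (R : realType) (n : nat).
Notation V := 'cV[R]_n.+1.
Notation End := 'M[R]_n.+1.

Definition ipf (B : End) (x y : V) : R := (x^T *m B *m y) 0 0.

Definition indefinite_inner_product (B : End) : Prop :=
  [/\ B^T = B, B \in unitmx,
      exists x : V, 0 < ipf B x x & exists y : V, ipf B y y < 0].

Definition self_adjoint (B : End) (g : End) : Prop :=
  forall x y : V, ipf B (g *m x) y = ipf B x (g *m y).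

Definition projection (p : End) : Prop := p *m p = p.

(* The quadric generated by g: its points are the nonzero vectors x
   (representatives of points of P(V)) with <x, g x> = 0.  This condition
   is invariant under nonzero scaling, so it describes a subset of P(V). *)
Definition quadric (B : End) (g : End) : V -> Prop :=
  fun x => x != 0 /\ ipf B x (g *m x) = 0.

(* The dual of the quadric generated by an invertible g is given by g^-1. *)
Definition dual (g : End) : End := invmx g.

(* A two-dimensional subspace W of the space of linear maps of V containing p
   (subspaces of 'M_(n.+1) encoded as in mxalgebra, via mxvec). *)
Definition pencil_space (p : End) (W : 'M[R]_(n.+1 ^ 2)) : Prop :=
  \rank W = 2%N /\ (p \in W)%MS.

Definition in_projection_pencil (B : End) (W : 'M[R]_(n.+1 ^ 2)) (g : End) : Prop :=
  [/\ self_adjoint B g, g \in unitmx & (dual g \in W)%MS].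

End Defs.

(* Main.v *)
Require Import Defs.
From HB Require Import structures.
From mathcomp Require Import all_boot all_order all_algebra.
From mathcomp Require Import reals.
Import Order.TTheory GRing.Theory Num.Theory.
Local Open Scope ring_scope.

Section H.
Variables (R : realType) (n : nat) (B : 'M[R]_n.+1).

Lemma ipf_addl (M N : 'M[R]_n.+1) (y z : 'cV[R]_n.+1) :
  ipf B ((M + N) *m y) z = ipf B (M *m y) z + ipf B (N *m y) z.
Proof. by rewrite /ipf mulmxDl linearD /= !mulmxDl mxE. Qed.

Lemma ipf_scalel a (M : 'M[R]_n.+1) (y z : 'cV[R]_n.+1) :
  ipf B ((a *: M) *m y) z = a * ipf B (M *m y) z.
Proof. by rewrite /ipf -scalemxAl linearZ /= -!scalemxAl mxE. Qed.

Lemma ipf_scaler a (M : 'M[R]_n.+1) (y z : 'cV[R]_n.+1) :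
  ipf B y ((a *: M) *m z) = a * ipf B y (M *m z).
Proof. by rewrite /ipf -scalemxAl -!scalemxAr mxE. Qed.

End H.

Theorem mainTheorem2 (R : realType) (n : nat) (B : 'M[R]_n.+1)
    (p : 'M[R]_n.+1) (W : 'M[R]_(n.+1 ^ 2)) (g0 gl : 'M[R]_n.+1) (x : 'cV[R]_n.+1) :
  indefinite_inner_product B ->
  self_adjoint B p -> projection p ->
  pencil_space p W ->
  in_projection_pencil B W g0 -> in_projection_pencil B W gl ->
  ~ (forall y : 'cV[R]_n.+1, quadric B g0 y <-> quadric B gl y) ->
  quadric B g0 x -> quadric B gl x ->
  ipf B (p *m (g0 *m x)) (gl *m x) = 0.
Proof.
move=> _ _ _ [rW pW] [sa0 u0 d0] [sal ul dl] neq [_ q0] [_ ql].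
rewrite /dual in d0 dl.
set F : 'I_3 -> 'M[R]_n.+1 := fun i => if i == 0 then invmx g0 else if i == 1 then invmx gl else p.
pose M := \matrix_(i < 3) mxvec (F i).
have MW : (M <= W)%MS.
  apply/row_subP => i; rewrite rowK /F.
  by case: ifP => _ //; case: ifP.
have nf : ~~ row_free M.
  rewrite /row_free; apply/negP => /eqP h.
  by have := mxrankS MW; rewrite h rW.
have : kermx M != 0 by rewrite kermx_eq0.
case/rowV0Pn => u /sub_kermxP uM unz.
have sum0 : u 0 0 *: invmx g0 + u 0 1 *: invmx gl + u 0 2%:R *: p = 0.
  have := congr1 vec_mx uM; rewrite mulmx_sum_row linear_sum linear0 /=.
  rewrite !big_ord_recr big_ord0 /= add0r.
  rewrite !linearZ /= !rowK !mxvecK => h; rewrite -h /F /=.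
  by congr (_ + _ + _); congr (_ *: _); congr (u 0 _); apply/val_inj.
have f0 : ipf B (invmx g0 *m (g0 *m x)) (gl *m x) = 0 by rewrite mulKmx.
have fl : ipf B (invmx gl *m (g0 *m x)) (gl *m x) = 0.
  have e : gl *m x = gl *m (invmx gl *m (gl *m x)) by rewrite mulKVmx.
  by rewrite e -sal mulKVmx // mulKmx // sa0 q0.
have := congr1 (fun N => ipf B (N *m (g0 *m x)) (gl *m x)) sum0 => /=.
rewrite !ipf_addl !ipf_scalel f0 fl !mulr0 !add0r.
have -> : ipf B (0 *m (g0 *m x)) (gl *m x) = 0.
  by rewrite /ipf mul0mx trmx0 !mul0mx mxE.
move/eqP; rewrite mulf_eq0 => /orP [/eqP c0|/eqP //].
rewrite c0 scale0r addr0 in sum0.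
have unz' : forall (a : R) (N : 'M[R]_n.+1), N \in unitmx -> a *: N = 0 -> a = 0.
  move=> a N uN aN; apply/eqP/negPn/negP => an.
  have : N = 0 by rewrite -(scalerK an N) aN scaler0.
  move=> N0; move: uN; rewrite N0 unitmxE det0 unitr0 //.
have ui0 : invmx g0 \in unitmx by rewrite unitmx_inv.
have uil : invmx gl \in unitmx by rewrite unitmx_inv.
have [a0|an] := eqVneq (u 0 0) 0.
  rewrite a0 scale0r add0r in sum0.
  have b0 := unz' _ _ uil sum0.
  case/eqP: unz; apply/matrixP => i j.
  rewrite !ord1 mxE.
  case: j => [[|[|[|//]]] jp].
  - by rewrite -a0; congr (u 0 _); apply/val_inj.
  - by rewrite -b0; congr (u 0 _); apply/val_inj.
  - by rewrite -c0; congr (u 0 _); apply/val_inj.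
set b := u 0 1 in sum0.
set a := u 0 0 in sum0 an.
have e0 : invmx g0 = (- (b / a)) *: invmx gl.
  have ha : a *: invmx g0 = - (b *: invmx gl).
    by apply/eqP; rewrite -subr_eq0 opprK sum0.
  rewrite -[invmx g0](scalerK an) ha scalerN scalerA scaleNr.
  by rewrite mulrC.
have kn : - (b / a) != 0.
  apply/eqP => k0; move: ui0; rewrite e0 k0 scale0r unitmxE det0 unitr0 //.
have eg : g0 = (- (b / a))^-1 *: gl.
  by rewrite -(invmxK g0) e0 invmxZ ?invmxK // -e0.
apply: False_ind; apply: neq => y; rewrite /quadric eg ipf_scaler.
split => [] [yn h]; split => //.
  by move: h => /eqP; rewrite mulf_eq0 invr_eq0 (negPf kn) => /eqP.
by rewrite h mulr0.
Qed.
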